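(* For $\mu\in\mathcal{B}$ define $T_\mu: B_{X_\mu^*}\to[-1,1]^V$ by $T_\mu(f)(0_V)=0$ and $T_\mu(f)(u)=f(u)/\mu(u)$ for $u\in V\setminus\{0_V\}$, and let $K_\mu=T_\mu(B_{X_\mu^*})$. Then the set $K=\{(\mu,g)\in\mathcal{B}\times[-1,1]^V: g\in K_\mu\}$ is closed in $\mathcal{B}\times[-1,1]^V$ (product topology, $[-1,1]^V$ with the product topology).
   Context: $V$ is the set of finitely supported rational sequences; $\mathcal{P}\subset\mathbb{R}^V$ the seminorms on $V$ with pointwise convergence topology; for $\mu\in\mathcal{P}$, $\bar\mu$ is its seminorm extension to $c_{00}$ and $X_\mu$ the completion of $c_{00}/\{\bar\mu=0\}$; $\mathcal{B}$ is the set of $\mu\in\mathcal{P}$ with $X_\mu$ infinite-dimensional and $\bar\mu$ a norm on $c_{00}$, with the subspace topology. For $\mu\in\mathcal{B}$, $V\subset c_{00}\subset X_\mu$ and $\mu(u)>0$ for $u\ne0_V$. *)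

(* Defs.v *)
From HB Require Import structures.
From mathcomp Require Import all_boot all_order all_algebra.
From mathcomp Require Import all_classical all_reals all_analysis.
Set Implicit Arguments. Unset Strict Implicit. Unset Printing Implicit Defensive.
Import Order.TTheory GRing.Theory Num.Theory.
Local Open Scope ring_scope.
Local Open Scope classical_set_scope.

Definition fsupp (T : Type) (z : T) (x : nat -> T) : Prop :=
  exists N, forall n, (N <= n)%N -> x n = z.

Definition V : Type := {x : nat -> rat | fsupp 0 x}.

Definition c00 (R : realType) : Type := {x : nat -> R | fsupp 0 x}.

Lemma inclV_proof (R : realType) (v : V) :
  fsupp (0 : R) (fun n => ratr (proj1_sig v n)).
Proof.
case: v => x [N HN] /=; exists N => n Hn; by rewrite HN // rmorph0.
Qed.

Definition inclV (R : realType) (v : V) : c00 R :=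
  exist _ (fun n => ratr (proj1_sig v n)) (inclV_proof R v).

Definition isV0 (u : V) : Prop := forall n, proj1_sig u n = 0.

Definition is_seminormV (R : realType) (mu : V -> R) : Prop :=
  (forall u v w : V, (forall n, proj1_sig w n = proj1_sig u n + proj1_sig v n) ->
     mu w <= mu u + mu v) /\
  (forall (q : rat) (u w : V), (forall n, proj1_sig w n = q * proj1_sig u n) ->
     mu w = `|ratr q : R| * mu u).

Definition is_seminorm_c00 (R : realType) (nu : c00 R -> R) : Prop :=
  (forall x y z : c00 R,
     (forall n, proj1_sig z n = proj1_sig x n + proj1_sig y n) ->
     nu z <= nu x + nu y) /\
  (forall (a : R) (x z : c00 R), (forall n, proj1_sig z n = a * proj1_sig x n) ->
     nu z = `|a| * nu x).

Definition is_norm_c00 (R : realType) (nu : c00 R -> R) : Prop :=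
  is_seminorm_c00 nu /\ forall x, nu x = 0 -> forall n, proj1_sig x n = 0.

Definition seminorm_ext (R : realType) (mu : V -> R) (nu : c00 R -> R) : Prop :=
  is_seminorm_c00 nu /\ forall v : V, nu (inclV R v) = mu v.

(* mubar : the seminorm extension of mu to c00 (it exists and is unique when
   mu is a seminorm; default 0 otherwise). *)
Definition mubar (R : realType) (mu : V -> R) : c00 R -> R :=
  match pselect (exists nu, seminorm_ext mu nu) with
  | left H => proj1_sig (cid H)
  | right _ => fun _ => 0
  end.

(* X_mu = completion of c00 / {mubar = 0} is infinite-dimensional: for every n
   there are n vectors of c00 linearly independent modulo the kernel of mubar
   (the completion of a normed space has the same finite dimension as it,
   if any). *)
Definition Xmu_infinite_dim (R : realType) (mu : V -> R) : Prop :=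
  forall (n : nat), exists x : 'I_n -> c00 R,
    forall (a : 'I_n -> R) (z : c00 R),
      (forall k, proj1_sig z k = \sum_(i < n) a i * proj1_sig (x i) k) ->
      mubar mu z = 0 -> forall i, a i = 0.

Definition Bset (R : realType) : set (V -> R) :=
  [set mu | is_seminormV mu /\ Xmu_infinite_dim mu /\ is_norm_c00 (mubar mu)].

Arguments Bset : clear implicits.
Definition cube (R : realType) : set (V -> R) :=
  [set g | forall u, -1 <= g u <= 1].

Arguments cube : clear implicits.
(* Closed unit ball of X_mu^*: a functional in B_{X_mu^*} is the same as (the
   unique continuous extension of) a linear functional f on c00 with
   |f x| <= mubar x, since c00/{mubar = 0} is dense in X_mu. *)
Definition dual_ball (R : realType) (mu : V -> R) : set (c00 R -> R) :=
  [set f | (forall x y z : c00 R,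
              (forall n, proj1_sig z n = proj1_sig x n + proj1_sig y n) ->
              f z = f x + f y) /\
           (forall (a : R) (x z : c00 R),
              (forall n, proj1_sig z n = a * proj1_sig x n) -> f z = a * f x) /\
           (forall x, `|f x| <= mubar mu x)].

Definition Tmu (R : realType) (mu : V -> R) (f : c00 R -> R) : V -> R :=
  fun u => if pselect (isV0 u) then 0 else f (inclV R u) / mu u.

Definition Kmu (R : realType) (mu : V -> R) : set (V -> R) :=
  [set g | exists2 f, dual_ball mu f & g = Tmu mu f].

Definition Kset (R : realType) : set ((V -> R) * (V -> R)) :=
  [set p | Bset R p.1 /\ cube R p.2 /\ Kmu p.1 p.2].
Arguments Kset : clear implicits.

(* Main.v *)
Require Import Defs.
From HB Require Import structures.
From mathcomp Require Import all_boot all_order all_algebra.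
From mathcomp Require Import all_classical all_reals all_analysis.
From mathcomp Require Import lra.
Import numFieldNormedType.Exports.
Import Order.TTheory GRing.Theory Num.Theory.
Local Open Scope ring_scope.
Local Open Scope classical_set_scope.
Set Implicit Arguments. Unset Strict Implicit.

Section Helpers.
Variable R : realType.

Definition c00_mk (f : nat -> R) (N : nat) (H : forall n, (N <= n)%N -> f n = 0) : c00 R :=
  exist _ f (ex_intro _ N H).

Definition V_mk (f : nat -> rat) (N : nat) (H : forall n, (N <= n)%N -> f n = 0) : V :=
  exist _ f (ex_intro _ N H).

Lemma ek_proof k : forall n, (k.+1 <= n)%N -> ((n == k)%:R : R) = 0.
Proof. by move=> n H; rewrite (gtn_eqF H). Qed.
Definition ek k : c00 R := @c00_mk (fun n => (n == k)%:R) k.+1 (@ek_proof k).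

Lemma eV_proof k : forall n, (k.+1 <= n)%N -> ((n == k)%:R : rat) = 0.
Proof. by move=> n H; rewrite (gtn_eqF H). Qed.
Definition eV k : V := @V_mk (fun n => (n == k)%:R) k.+1 (@eV_proof k).

Lemma trunc_proof (d : nat -> R) N : forall n, (N <= n)%N -> (if (n < N)%N then d n else 0) = 0.
Proof. by move=> n H; rewrite ltnNge H. Qed.

Lemma single_proof (a : R) N : forall n, (N.+1 <= n)%N -> a * (n == N)%:R = 0.
Proof. by move=> n H; rewrite (gtn_eqF H) mulr0. Qed.

Lemma c00_ind_le (h : c00 R -> R) (s : R -> R) :
  s 0 = 0 ->
  (forall x y z : c00 R, (forall n, sval z n = sval x n + sval y n) -> h z <= h x + h y) ->
  (forall a (x z : c00 R), (forall n, sval z n = a * sval x n) -> h z = s a * h x) ->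
  forall N (d : c00 R), (forall n, (N <= n)%N -> sval d n = 0) ->
  h d <= \sum_(k < N) s (sval d k) * h (ek k).
Proof.
move=> s0 hadd hsc; elim=> [|N IH] d dN.
  by rewrite big_ord0 (hsc 0 d d) ?s0 ?mul0r // => n; rewrite mul0r dN.
pose d' := @c00_mk _ N (@trunc_proof (sval d) N).
pose w := @c00_mk _ N.+1 (@single_proof (sval d N) N).
apply: (le_trans (hadd d' w d _)).
  move=> n; rewrite /d' /w /=; case: (ltngtP n N) => H.
  - by rewrite mulr0 addr0.
  - by rewrite dN // mulr0 addr0.
  - by rewrite mulr1 add0r H.
rewrite big_ord_recr /=; apply: lerD.
  apply: le_trans (IH d' _) _.
    by move=> n H; rewrite /d' /= ltnNge H.
  rewrite (eq_bigr (fun k : 'I_N => s (sval d k) * h (ek k))) // => k _.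
  by rewrite /d' /= ltn_ord.
by rewrite (hsc (sval d N) (ek N) w).
Qed.

Lemma sum_bound (G : nat -> R) N M : (forall n, (N <= n)%N -> G n = 0) -> (N <= M)%N ->
  \sum_(k < M) G k = \sum_(k < N) G k.
Proof.
move=> HG; elim: M => [|M IH] HNM.
  by move: HNM; rewrite leqn0 => /eqP ->.
case: (leqP N M) => H.
  by rewrite big_ord_recr /= IH // HG // addr0.
by have -> : N = M.+1 by apply/eqP; rewrite eqn_leq HNM H.
Qed.

Definition sb (x : c00 R) : nat := sval (cid (proj2_sig x)).
Lemma sbP x n : (sb x <= n)%N -> sval x n = 0.
Proof. exact: (svalP (cid (proj2_sig x)) n). Qed.

Definition fdef (phi : nat -> R) (x : c00 R) := \sum_(k < sb x) sval x k * phi k.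

Lemma fdefE phi x N : (forall n, (N <= n)%N -> sval x n = 0) ->
  fdef phi x = \sum_(k < N) sval x k * phi k.
Proof.
move=> HN; rewrite /fdef.
rewrite -(@sum_bound (fun k => sval x k * phi k) (sb x) (maxn (sb x) N)); last exact: leq_maxl.
  rewrite -(@sum_bound (fun k => sval x k * phi k) N (maxn (sb x) N)) //; last exact: leq_maxr.
  by move=> n H; rewrite HN // mul0r.
by move=> n H; rewrite sbP // mul0r.
Qed.

End Helpers.
Section G.
Variables (R : realType) (T : topologicalType).
Lemma mulc (f g : T -> R) : continuous f -> continuous g -> continuous (fun p => f p * g p).
Proof. move=> cf cg p; exact: cvgM (cf p) (cg p). Qed.
Lemma subc (f g : T -> R) : continuous f -> continuous g -> continuous (fun p => f p - g p).
Proof. move=> cf cg p; exact: cvgB (cf p) (cg p). Qed.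
Lemma cstc (c : R) : continuous (fun _ : T => c).
Proof. move=> p; exact: cvg_cst. Qed.
End G.

Section Main.
Variable R : realType.
Notation P := ({ptws V -> R} * {ptws V -> R})%type.

Lemma ev_cont (v : V) : continuous (fun f : {ptws V -> R} => f v).
Proof. exact: (@proj_continuous {classic V} (fun _ => R) v). Qed.
Lemma ev1_cont (v : V) : continuous (fun p : P => p.1 v).
Proof. move=> p; apply: (@continuous_comp P _ _ fst (fun f : {ptws V -> R} => f v) p); [exact: cvg_fst | exact: ev_cont]. Qed.
Lemma ev2_cont (v : V) : continuous (fun p : P => p.2 v).
Proof. move=> p; apply: (@continuous_comp P _ _ snd (fun f : {ptws V -> R} => f v) p); [exact: cvg_snd | exact: ev_cont]. Qed.
Lemma closed_zero (F : P -> R) : continuous F -> closed [set p | F p = 0].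
Proof. move=> cF; apply: (preimage_closed (f := F) (D := [set x | x = 0])); [move=> ? _; exact: cF|exact: closed_eq]. Qed.
Lemma sum_cont N (F : 'I_N -> P -> R) : (forall i, continuous (F i)) -> continuous (fun p => \sum_(i < N) F i p).
Proof. move=> H; apply: continuous_big => //; exact: add_continuous. Qed.

Definition bnd (v : V) (N : nat) := forall n, (N <= n)%N -> sval v n = 0.

Definition Fi (i : V * nat) (p : P) : R :=
  p.2 i.1 * p.1 i.1 - \sum_(k < i.2) ratr (sval i.1 k) * (p.2 (eV k) * p.1 (eV k)).

Definition Cset : set P :=
  (\bigcap_(v in isV0) [set p : P | p.2 v = 0]) `&`
  (\bigcap_(i in [set i | bnd i.1 i.2]) [set p : P | Fi i p = 0]).

Lemma Cset_closed : closed Cset.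
Proof.
apply: closedI; apply: closed_bigI => i _.
  exact/closed_zero/ev2_cont.
apply/closed_zero; rewrite /Fi; apply: subc.
  by apply: mulc; [exact: ev2_cont|exact: ev1_cont].
apply: (@sum_cont i.2 (fun k q => ratr (sval i.1 k) * (q.2 (eV k) * q.1 (eV k)))) => k.
apply: mulc; first exact: cstc.
by apply: mulc; [exact: ev2_cont|exact: ev1_cont].
Qed.

Lemma semi_ge0 (nu : c00 R -> R) : is_seminorm_c00 nu -> forall x, 0 <= nu x.
Proof.
move=> [Hadd Hsc] x.
pose z := @c00_mk R (fun _ => 0) 0 (fun _ _ => erefl).
have Hy : forall n, (sb x <= n)%N -> - sval x n = 0 by move=> n H; rewrite sbP // oppr0.
pose y := @c00_mk R _ _ Hy.
have z0 : nu z = 0 by rewrite (Hsc 0 x z) ?normr0 ?mul0r // => n; rewrite mul0r.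
have := Hadd x y z; rewrite z0 (Hsc (-1) x y) ?normrN ?normr1 ?mul1r; last by move=> n; rewrite /= mulN1r.
move=> /(_ _) H; have {H} : 0 <= nu x + nu x by apply: H => n /=; rewrite subrr.
lra.
Qed.

Lemma mubar_ext (mu : V -> R) : Bset R mu -> seminorm_ext mu (mubar mu).
Proof.
move=> [_ [_ [_ Hn]]]; move: Hn; rewrite /mubar; case: pselect => [H _|H Hn].
  exact: (svalP (cid H)).
exfalso; have := Hn (ek R 0) erefl 0; rewrite /= => /eqP; by rewrite oner_eq0.
Qed.

Lemma mu_ge0 mu v : Bset R mu -> 0 <= mu v.
Proof. by move=> /mubar_ext [Hs He]; rewrite -He; apply: semi_ge0. Qed.

Lemma mu_neq0 mu v : Bset R mu -> ~ isV0 v -> mu v != 0.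
Proof.
move=> HB Hv; apply/eqP => H0; apply: Hv => n.
have [Hs He] := mubar_ext HB.
case: HB => [_ [_ [_ Hn]]].
have := Hn (inclV R v); rewrite He H0 => /(_ erefl n) /= /eqP.
by rewrite fmorph_eq0 => /eqP.
Qed.

Lemma inclV0 (v : V) N : bnd v N -> forall n, (N <= n)%N -> sval (inclV R v) n = 0.
Proof. by move=> Hv n H; rewrite /= Hv // rmorph0. Qed.

End Main.

Section Main2.
Variable R : realType.

Lemma f_lin (f : c00 R -> R) :
  (forall x y z : c00 R, (forall n, sval z n = sval x n + sval y n) -> f z = f x + f y) ->
  (forall a (x z : c00 R), (forall n, sval z n = a * sval x n) -> f z = a * f x) ->
  forall N (d : c00 R), (forall n, (N <= n)%N -> sval d n = 0) ->
  f d = \sum_(k < N) sval d k * f (ek R k).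
Proof.
move=> Ha Hs N d dN; apply/le_anti/andP; split.
  apply: (@c00_ind_le R f id erefl _ _ N d dN).
    by move=> x y z Hz; rewrite (Ha x y z Hz).
  exact: Hs.
have H : - f d <= \sum_(k < N) sval d k * - f (ek R k).
  apply: (@c00_ind_le R (fun x => - f x) id erefl _ _ N d dN).
    by move=> x y z Hz; rewrite (Ha x y z Hz) opprD.
  by move=> a x z Hz; rewrite (Hs a x z Hz) mulrN.
rewrite -lerN2 -sumrN; apply: le_trans H _.
rewrite le_eqVlt; apply/orP; left; apply/eqP/eq_bigr => k _; by rewrite mulrN.
Qed.

Lemma Tmu_mul mu f u : Bset R mu -> dual_ball mu f -> Tmu mu f u * mu u = f (inclV R u).
Proof.
move=> HB [Ha [Hs _]]; rewrite /Tmu; case: pselect => H.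
  rewrite mul0r (Hs 0 (inclV R u) (inclV R u)) ?mul0r // => n.
  by rewrite /= H rmorph0 mul0r.
by rewrite divfK // mu_neq0.
Qed.

Lemma Kset_C p : Kset R p -> @Cset R p.
Proof.
case: p => mu g; rewrite /Kset /= => -[HB [Hc [f Hf ->]]]; split => [v /= Hv | [v N] /= Hb].
  by rewrite /Tmu; case: pselect.
have [Ha [Hs _]] := Hf.
rewrite /Fi /= Tmu_mul // (f_lin Ha Hs (@inclV0 R _ _ Hb)).
apply/eqP; rewrite subr_eq0; apply/eqP; apply: eq_bigr => k _.
rewrite Tmu_mul // (Hs 1 (ek R k) (inclV R (eV k))) ?mul1r // => n.
by rewrite /= rmorph_nat mul1r.
Qed.

Lemma C_Kmu mu g : Bset R mu -> cube R g -> @Cset R (mu, g) -> Kmu mu g.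
Proof.
move=> HB Hc [C1 C2].
have [[Hadd Hsc] He] := mubar_ext HB.
pose phi k := g (eV k) * mu (eV k).
exists (fdef phi).
  split; [|split].
  - move=> x y z Hz.
    pose N := maxn (sb x) (sb y).
    have bx : forall n, (N <= n)%N -> sval x n = 0.
      by move=> n H; apply: sbP; apply: leq_trans H; exact: leq_maxl.
    have by_ : forall n, (N <= n)%N -> sval y n = 0.
      by move=> n H; apply: sbP; apply: leq_trans H; exact: leq_maxr.
    have bz : forall n, (N <= n)%N -> sval z n = 0.
      by move=> n H; rewrite Hz bx ?by_ ?addr0.
    rewrite (fdefE _ bz) (fdefE _ bx) (fdefE _ by_) -big_split /=.
    by apply: eq_bigr => k _; rewrite Hz mulrDl.
  - move=> a x z Hz.
    have bz : forall n, (sb x <= n)%N -> sval z n = 0.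
      by move=> n H; rewrite Hz sbP ?mulr0.
    rewrite (fdefE _ bz) (fdefE _ (fun n => @sbP R x n)) mulr_sumr.
    by apply: eq_bigr => k _; rewrite Hz mulrA.
  - move=> x.
    set N := sb x.
    have bx : forall n, (N <= n)%N -> sval x n = 0 := fun n => @sbP R x n.
    set nu := mubar mu.
    pose S1 := \sum_(k < N) `|phi k|.
    pose S2 := \sum_(k < N) nu (ek R k).
    have nu_ge0 : forall y, 0 <= nu y := semi_ge0 (conj Hadd Hsc).
    have S10 : 0 <= S1 by apply: sumr_ge0.
    have S20 : 0 <= S2 by apply: sumr_ge0.
    apply/ler_addgt0Pr => e e0.
    have M1 : 0 < S1 + S2 + 1 by lra.
    pose del := e / (S1 + S2 + 1).
    have del0 : 0 < del by apply: divr_gt0.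
    have HE : del * (S1 + S2 + 1) = e by rewrite /del divfK // gt_eqF.
    rewrite !mulrDr mulr1 in HE.
    have : forall k, exists q : rat, `|sval x k - ratr q| < del.
      move=> k; have [q] := @rat_in_itvoo R (sval x k - del) (sval x k + del) ltac:(lra).
      rewrite in_itv /= => /andP[h1 h2]; exists q; rewrite ltr_norml; apply/andP; split; lra.
    move=> /choice [q Hq].
    have bq : forall n, (N <= n)%N -> (if (n < N)%N then q n else 0) = 0.
      by move=> n H; rewrite ltnNge H.
    pose v := V_mk bq.
    have bv : bnd v N by move=> n H; rewrite /= ltnNge H.
    have E1 : fdef phi (inclV R v) = g v * mu v.
      have := C2 (v, N) bv; rewrite /Fi /= => /eqP; rewrite subr_eq0 => /eqP ->.
      by rewrite (fdefE _ (@inclV0 R _ _ bv)).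
    have E2 : `|g v * mu v| <= nu (inclV R v).
      have hg : `|g v| <= 1 by rewrite ler_norml; exact: Hc v.
      have hm := mu_ge0 v HB.
      rewrite /nu He normrM (ger0_norm hm); nra.
    have E3 : `|fdef phi x - fdef phi (inclV R v)| <= del * S1.
      rewrite (fdefE _ bx) (fdefE _ (@inclV0 R _ _ bv)) -sumrB /S1 mulr_sumr.
      apply: le_trans (ler_norm_sum _ _ _) _; apply: ler_sum => k _.
      rewrite /= ltn_ord -mulrBl normrM; apply: ler_wpM2r => //; exact/ltW/Hq.
    have bd : forall n, (N <= n)%N -> ratr (sval v n) - sval x n = 0.
      by move=> n H; rewrite bv // bx // rmorph0 subr0.
    pose d := c00_mk bd.
    have E4 : nu (inclV R v) <= nu x + nu d.
      by apply: Hadd => n /=; rewrite addrC subrK.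
    have E5 : nu d <= del * S2.
      apply: le_trans (@c00_ind_le R nu (fun a : R => `|a|) (normr0 _) Hadd Hsc N d bd) _.
      rewrite /S2 mulr_sumr; apply: ler_sum => k _.
      rewrite /= ltn_ord distrC; apply: ler_wpM2r => //; exact/ltW/Hq.
    have -> : fdef phi x = fdef phi (inclV R v) + (fdef phi x - fdef phi (inclV R v)).
      by rewrite addrC subrK.
    apply: le_trans (ler_normD _ _) _.
    rewrite E1 in E3 *.
    lra.
apply/funext => u; rewrite /Tmu; case: pselect => Hu; first by have := C1 u Hu; rewrite /= => ->.
case: (svalP u) => N HN.
rewrite (fdefE _ (@inclV0 R _ _ HN)) /=.
have := C2 (u, N) HN; rewrite /Fi /= => /eqP; rewrite subr_eq0 => /eqP <-.
by rewrite mulfK // mu_neq0.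
Qed.

End Main2.

Theorem lemma4p1 (R : realType) :
  exists C : set ({ptws V -> R} * {ptws V -> R}),
    closed C /\ Kset R = C `&` (Bset R `*` cube R).
Proof.
exists (@Cset R); split; first exact: Cset_closed.
apply/seteqP; split => [[mu g] HK|[mu g] [HC [HB Hc]]].
  split; first exact: Kset_C.
  by case: HK => [HB [Hc _]]; split.
by split; [|split] => //; exact: C_Kmu.
Qed.
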